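(* Let $\mathcal C$ be a cartesian closed category with regular epi-mono factorizations (every arrow factors as a regular epimorphism followed by a monomorphism), and let $S$ be an object of $\mathcal C$ having at least one global element $1\to S$. Then the functor $U:\mathcal C\to\mathcal C$, $X\mapsto X^S$, is monadic: the comparison functor $K:\mathcal C\to\mathbf{Alg}^T$, $KY=(Y^S,\epsilon_Y^S)$, $Kg=g^S$, is an equivalence of categories, where $T=UF$ is the state monad of the adjunction $F\dashv U$ with $F(X)=S\times X$.
   Context: $TX=(S\times X)^S$; $\epsilon_Z:S\times Z^S\to Z$ is evaluation (the counit); for $f:S\times X\to Z$, $f^*:X\to Z^S$ is its transpose; $\eta_X=(\mathrm{id}_{S\times X})^*$, $\mu_X=(\epsilon_{S\times X})^S$. A $T$-algebra is a pair $(X,h)$ with $h:TX\to X$, $h\circ Th=h\circ\mu_X$, $h\circ\eta_X=\mathrm{id}_X$; morphisms $u:(X,h)\to(X',h')$ satisfy $h'\circ Tu=u\circ h$; these form $\mathbf{Alg}^T$. ''Monadic'' means $K$ is an equivalence of categories (not necessarily an isomorphism). *)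

(* Defs.v *)
Set Implicit Arguments.
Unset Strict Implicit.

(** * Categories (hom-types with Leibniz equality of morphisms) *)
Record Category := {
  Ob :> Type;
  Hom : Ob -> Ob -> Type;
  idm : forall A, Hom A A;
  comp : forall A B D, Hom B D -> Hom A B -> Hom A D;
  comp_id_l : forall A B (f : Hom A B), comp (idm B) f = f;
  comp_id_r : forall A B (f : Hom A B), comp f (idm A) = f;
  comp_assoc : forall A B D E (f : Hom A B) (g : Hom B D) (h : Hom D E),
      comp h (comp g f) = comp (comp h g) f
}.
Arguments Hom {c} _ _.
Arguments idm {c} A.
Arguments comp {c A B D} _ _.

Declare Scope cat_scope.
Notation "g ∘ f" := (comp g f) (at level 40, left associativity) : cat_scope.
Open Scope cat_scope.

Definition mono (C : Category) (A B : C) (m : Hom A B) : Prop :=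
  forall (Z : C) (a b : Hom Z A), m ∘ a = m ∘ b -> a = b.

Definition regular_epi (C : Category) (A B : C) (e : Hom A B) : Prop :=
  exists (Z : C) (g h : Hom Z A),
    e ∘ g = e ∘ h /\
    forall (W : C) (f : Hom A W), f ∘ g = f ∘ h ->
      exists! k : Hom B W, k ∘ e = f.

Definition has_regular_epi_mono_factorizations (C : Category) : Prop :=
  forall (A B : C) (f : Hom A B),
    exists (M : C) (e : Hom A M) (m : Hom M B),
      regular_epi e /\ mono m /\ f = m ∘ e.

(** * Cartesian closed structure (chosen terminal object, products, exponentials).
    [exp S Z] is Z^S, with evaluation [ev S Z : S × Z^S -> Z] and
    transpose [curry f : X -> Z^S] of [f : S × X -> Z]. *)
Record CCC (C : Category) := {
  one : C;
  bang : forall A : C, Hom A one;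
  bang_uniq : forall (A : C) (f : Hom A one), f = bang A;
  prod : C -> C -> C;
  pr1 : forall A B : C, Hom (prod A B) A;
  pr2 : forall A B : C, Hom (prod A B) B;
  pair : forall (X A B : C), Hom X A -> Hom X B -> Hom X (prod A B);
  pr1_pair : forall X A B (f : Hom X A) (g : Hom X B), pr1 A B ∘ pair f g = f;
  pr2_pair : forall X A B (f : Hom X A) (g : Hom X B), pr2 A B ∘ pair f g = g;
  pair_uniq : forall X A B (f : Hom X A) (g : Hom X B) (h : Hom X (prod A B)),
      pr1 A B ∘ h = f -> pr2 A B ∘ h = g -> h = pair f g;
  exp : C -> C -> C;
  ev : forall S Z : C, Hom (prod S (exp S Z)) Z;
  curry : forall (S X Z : C), Hom (prod S X) Z -> Hom X (exp S Z);
  ev_curry : forall S X Z (f : Hom (prod S X) Z),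
      ev S Z ∘ pair (pr1 S X) (curry f ∘ pr2 S X) = f;
  curry_uniq : forall S X Z (f : Hom (prod S X) Z) (g : Hom X (exp S Z)),
      ev S Z ∘ pair (pr1 S X) (g ∘ pr2 S X) = f -> g = curry f
}.
Arguments one {C} c.
Arguments prod {C} c _ _.
Arguments pr1 {C} c A B.
Arguments pr2 {C} c A B.
Arguments pair {C} c {X A B} _ _.
Arguments exp {C} c _ _.
Arguments ev {C} c S Z.
Arguments curry {C} c {S X Z} _.

Section StateMonad.
Variables (C : Category) (H : CCC C) (S : C).

Definition prodmap (A B A' B' : C) (f : Hom A A') (g : Hom B B')
  : Hom (prod H A B) (prod H A' B') :=
  pair H (f ∘ pr1 H A B) (g ∘ pr2 H A B).

Definition expmap (X Y : C) (g : Hom X Y) : Hom (exp H S X) (exp H S Y) :=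
  curry H (g ∘ ev H S X).

Definition Tob (X : C) : C := exp H S (prod H S X).
Definition Tmap (X Y : C) (u : Hom X Y) : Hom (Tob X) (Tob Y) :=
  expmap (prodmap (idm S) u).

Definition eta (X : C) : Hom X (Tob X) := curry H (idm (prod H S X)).
Definition mu (X : C) : Hom (Tob (Tob X)) (Tob X) := expmap (ev H S (prod H S X)).

Definition is_T_algebra (X : C) (h : Hom (Tob X) X) : Prop :=
  h ∘ Tmap h = h ∘ mu X /\ h ∘ eta X = idm X.

Definition is_T_algebra_hom (X : C) (h : Hom (Tob X) X) (X' : C) (h' : Hom (Tob X') X')
  (u : Hom X X') : Prop :=
  h' ∘ Tmap u = u ∘ h.

Definition Kstr (Y : C) : Hom (Tob (exp H S Y)) (exp H S Y) := expmap (ev H S Y).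

Definition is_iso (A B : C) (f : Hom A B) : Prop :=
  exists g : Hom B A, g ∘ f = idm A /\ f ∘ g = idm B.

(** The comparison functor K : C -> Alg^T (K Y = (Y^S, eps_Y^S), K g = g^S) is
    well defined and is an equivalence of categories: there is a functor
    G : Alg^T -> C (given by [G0] on objects, [G1] on morphisms; only its values
    on T-algebras / T-algebra morphisms matter) with natural isomorphisms
    Id_C ≅ G K (components [a]) and K G ≅ Id_{Alg^T} (components [b],
    isomorphisms in Alg^T). *)
Definition comparison_is_equivalence : Prop :=
  (forall Y : C, is_T_algebra (Kstr Y)) /\
  (forall (Y Y' : C) (g : Hom Y Y'), is_T_algebra_hom (Kstr Y) (Kstr Y') (expmap g)) /\
  exists (G0 : forall X : C, Hom (Tob X) X -> C)
         (G1 : forall (X : C) (h : Hom (Tob X) X) (X' : C) (h' : Hom (Tob X') X'),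
                 Hom X X' -> Hom (G0 X h) (G0 X' h'))
         (a : forall Y : C, Hom Y (G0 _ (Kstr Y)))
         (b : forall (X : C) (h : Hom (Tob X) X), Hom (exp H S (G0 _ h)) X),
    (forall X (h : Hom (Tob X) X), is_T_algebra h -> G1 _ h _ h (idm X) = idm (G0 _ h)) /\
    (forall X1 (h1 : Hom (Tob X1) X1) X2 (h2 : Hom (Tob X2) X2)
            X3 (h3 : Hom (Tob X3) X3) (u : Hom X1 X2) (v : Hom X2 X3),
        is_T_algebra h1 -> is_T_algebra h2 -> is_T_algebra h3 ->
        is_T_algebra_hom h1 h2 u -> is_T_algebra_hom h2 h3 v ->
        G1 _ h1 _ h3 (v ∘ u) = G1 _ h2 _ h3 v ∘ G1 _ h1 _ h2 u) /\
    (forall Y : C, is_iso (a Y)) /\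
    (forall (Y Y' : C) (g : Hom Y Y'),
        G1 _ (Kstr Y) _ (Kstr Y') (expmap g) ∘ a Y = a Y' ∘ g) /\
    (forall X (h : Hom (Tob X) X), is_T_algebra h ->
        is_T_algebra_hom (Kstr (G0 _ h)) h (b _ h) /\
        exists binv : Hom X (exp H S (G0 _ h)),
          binv ∘ b _ h = idm _ /\ b _ h ∘ binv = idm X /\
          is_T_algebra_hom h (Kstr (G0 _ h)) binv) /\
    (forall X (h : Hom (Tob X) X) X' (h' : Hom (Tob X') X') (u : Hom X X'),
        is_T_algebra h -> is_T_algebra h' -> is_T_algebra_hom h h' u ->
        u ∘ b _ h = b _ h' ∘ expmap (G1 _ h _ h' u)).

End StateMonad.

(* Main.v *)
Require Import Defs.
Set Implicit Arguments. Unset Strict Implicit.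

Section Basics.
Variables (C : Category) (H : CCC C).

Lemma comp_pair X Y A B (f : Hom X A) (g : Hom X B) (k : Hom Y X) :
  pair H f g ∘ k = pair H (f ∘ k) (g ∘ k).
Proof.
  apply pair_uniq.
  - rewrite comp_assoc, pr1_pair; reflexivity.
  - rewrite comp_assoc, pr2_pair; reflexivity.
Qed.

Lemma pair_id A B : pair H (pr1 H A B) (pr2 H A B) = idm _.
Proof. symmetry; apply pair_uniq; apply comp_id_r. Qed.

Lemma curry_nat S X Y Z (φ : Hom (prod H S X) Z) (γ : Hom Y X) :
  curry H φ ∘ γ = curry H (φ ∘ pair H (pr1 H S Y) (γ ∘ pr2 H S Y)).
Proof.
  apply curry_uniq.
  assert (E : pair H (pr1 H S Y) ((curry H φ ∘ γ) ∘ pr2 H S Y)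
             = pair H (pr1 H S X) (curry H φ ∘ pr2 H S X) ∘ pair H (pr1 H S Y) (γ ∘ pr2 H S Y)).
  { rewrite comp_pair, pr1_pair, <- !comp_assoc, pr2_pair. reflexivity. }
  rewrite E, comp_assoc, ev_curry. reflexivity.
Qed.

Lemma beta0 S G Z (s : Hom G S) (φ : Hom (prod H S G) Z) :
  ev H S Z ∘ pair H s (curry H φ) = φ ∘ pair H s (idm G).
Proof.
  assert (E : pair H s (curry H φ)
             = pair H (pr1 H S G) (curry H φ ∘ pr2 H S G) ∘ pair H s (idm G)).
  { rewrite comp_pair, pr1_pair, <- comp_assoc, pr2_pair, comp_id_r. reflexivity. }
  rewrite E, comp_assoc, ev_curry. reflexivity.
Qed.

Lemma pair_eta X A B (f : Hom X (prod H A B)) : pair H (pr1 H A B ∘ f) (pr2 H A B ∘ f) = f.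
Proof. symmetry; apply pair_uniq; reflexivity. Qed.

Lemma bang_comp A B (k : Hom A B) : bang H B ∘ k = bang H A.
Proof. apply bang_uniq. Qed.

Lemma ext S A Z (f g : Hom A (exp H S Z)) :
  ev H S Z ∘ pair H (pr1 H S A) (f ∘ pr2 H S A) = ev H S Z ∘ pair H (pr1 H S A) (g ∘ pr2 H S A) ->
  f = g.
Proof.
  intro E. rewrite (curry_uniq E). symmetry. apply curry_uniq. reflexivity.
Qed.
End Basics.

Ltac norm := repeat progress (rewrite ?comp_id_l, ?comp_id_r, <- ?comp_assoc, ?pr1_pair, ?pr2_pair,
   ?comp_pair, ?pair_id, ?pair_eta, ?bang_comp, ?beta0, ?curry_nat).
Ltac normin E := repeat progress (rewrite ?comp_id_l, ?comp_id_r, <- ?comp_assoc, ?pr1_pair, ?pr2_pair,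
   ?comp_pair, ?pair_id, ?pair_eta, ?bang_comp, ?beta0, ?curry_nat in E).

Ltac unf := unfold is_T_algebra_hom, is_T_algebra, Kstr, Tmap, mu, eta, expmap, prodmap, Tob in *.

Section Main.
Variables (C : Category) (H : CCC C) (S : C) (s0 : Hom (one H) S).

Lemma law1 X (h : Hom (exp H S (prod H S X)) X) (Hh : is_T_algebra h) G (x : Hom G X) :
  h ∘ curry H (pair H (pr1 H S G) (x ∘ pr2 H S G)) = x.
Proof.
  destruct Hh as [_ E]. unf.
  rewrite <- (comp_id_l (pair H (pr1 H S G) (x ∘ pr2 H S G))), <- curry_nat, comp_assoc, E.
  apply comp_id_l.
Qed.

Lemma law2 X (h : Hom (exp H S (prod H S X)) X) (Hh : is_T_algebra h) G
  (σ : Hom (prod H S G) S) (χ : Hom (prod H S (prod H S G)) (prod H S X)) :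
  h ∘ curry H (pair H σ (h ∘ curry H χ)) = h ∘ curry H (χ ∘ pair H σ (idm _)).
Proof.
  destruct Hh as [E _].
  pose proof (f_equal (fun k => k ∘ curry H (pair H σ (curry H χ))) E) as E2.
  simpl in E2. unf.
  normin E2. norm. exact E2.
Qed.
Variable fact : forall (A B : C) (f : Hom A B),
  {M : C & {e : Hom A M & {m : Hom M B | regular_epi e /\ mono m /\ f = m ∘ e}}}.

Lemma law1n X (h : Hom (exp H S (prod H S X)) X) (Hh : is_T_algebra h) :
  h ∘ curry H (idm (prod H S X)) = idm X.
Proof. destruct Hh as [_ E]. unf. exact E. Qed.

Ltac alg Hh := repeat progress (norm; rewrite ?(law2 Hh), ?(law1n Hh), ?(law1 Hh)).

Definition cc X : Hom X (exp H S (prod H S X)) :=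
  curry H (pair H (s0 ∘ bang H (prod H S X)) (pr2 H S X)).
Definition eh X (h : Hom (exp H S (prod H S X)) X) : Hom X X := h ∘ cc X.
Definition G0 X (h : Hom (exp H S (prod H S X)) X) : C := projT1 (fact (eh h)).
Definition qq X (h : Hom (exp H S (prod H S X)) X) : Hom X (G0 h) := projT1 (projT2 (fact (eh h))).
Definition mm X (h : Hom (exp H S (prod H S X)) X) : Hom (G0 h) X := proj1_sig (projT2 (projT2 (fact (eh h)))).

Lemma mq X (h : Hom (exp H S (prod H S X)) X) : mm h ∘ qq h = eh h.
Proof. unfold mm, qq, G0. destruct (fact (eh h)) as [M [e [m [? [? ?]]]]]. simpl. auto. Qed.
Lemma mono_m X (h : Hom (exp H S (prod H S X)) X) : mono (mm h).
Proof. unfold mm, qq, G0. destruct (fact (eh h)) as [M [e [m [? [? ?]]]]]. simpl. auto. Qed.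
Lemma epi_q X (h : Hom (exp H S (prod H S X)) X) W (u v : Hom (G0 h) W) : u ∘ qq h = v ∘ qq h -> u = v.
Proof.
  unfold G0, qq in *. destruct (fact (eh h)) as [M [e [m [[Z [g [k [E1 E2]]]] [? ?]]]]]. simpl in *.
  intro E. destruct (E2 W (u ∘ e)) as [w [_ U]].
  { rewrite <- !comp_assoc, E1. reflexivity. }
  rewrite <- (U u eq_refl). apply U. auto.
Qed.

Lemma mqk X (h : Hom (exp H S (prod H S X)) X) Y (k : Hom Y X) : mm h ∘ (qq h ∘ k) = eh h ∘ k.
Proof. rewrite comp_assoc, mq. reflexivity. Qed.

Lemma eh_idem X (h : Hom (exp H S (prod H S X)) X) (Hh : is_T_algebra h) : eh h ∘ eh h = eh h.
Proof.
  unfold eh, cc. norm. rewrite (law2 Hh). norm. reflexivity.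
Qed.

Lemma qm X (h : Hom (exp H S (prod H S X)) X) (Hh : is_T_algebra h) : qq h ∘ mm h = idm _.
Proof.
  apply epi_q. rewrite comp_id_l. apply mono_m.
  rewrite !comp_assoc, mq, <- comp_assoc, mq. apply eh_idem; auto.
Qed.


Lemma Kalg Y : is_T_algebra (Kstr H S Y).
Proof.
  unf. split.
  - apply ext. norm. reflexivity.
  - apply ext. norm. reflexivity.
Qed.

Lemma Khom Y Y' (g : Hom Y Y') : is_T_algebra_hom (Kstr H S Y) (Kstr H S Y') (expmap H S g).
Proof. unf. apply ext. norm. reflexivity. Qed.

Lemma hom_e X (h : Hom (exp H S (prod H S X)) X) X' (h' : Hom (exp H S (prod H S X')) X')
  (u : Hom X X') : is_T_algebra_hom h h' u -> u ∘ eh h = eh h' ∘ u.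
Proof.
  unf. intro E. unfold eh, cc. rewrite comp_assoc, <- E. norm. reflexivity.
Qed.

Definition kk X : Hom (prod H S X) (exp H S (prod H S X)) := curry H (pr2 H S (prod H S X)).
Definition binv X (h : Hom (exp H S (prod H S X)) X) : Hom X (exp H S (G0 h)) :=
  curry H (qq h ∘ (h ∘ kk X)).
Definition bb X (h : Hom (exp H S (prod H S X)) X) : Hom (exp H S (G0 h)) X :=
  h ∘ curry H (pair H (pr1 H S (exp H S (G0 h))) (mm h ∘ ev H S (G0 h))).

Lemma b_binv X (h : Hom (exp H S (prod H S X)) X) (Hh : is_T_algebra h) : bb h ∘ binv h = idm X.
Proof.
  unfold bb, binv, kk. norm. rewrite mqk. unfold eh, cc. norm.
  alg Hh. reflexivity.
Qed.

Lemma em X (h : Hom (exp H S (prod H S X)) X) (Hh : is_T_algebra h) : eh h ∘ mm h = mm h.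
Proof. rewrite <- mq, <- comp_assoc, (qm Hh). apply comp_id_r. Qed.

Lemma binv_b X (h : Hom (exp H S (prod H S X)) X) (Hh : is_T_algebra h) : binv h ∘ bb h = idm _.
Proof.
  apply ext. unfold bb, binv, kk. alg Hh.
  rewrite <- (em Hh). unfold eh at 1, cc. alg Hh.
  transitivity (qq h ∘ (eh h ∘ (mm h ∘ ev H S (G0 h)))).
  { unfold eh, cc. norm. reflexivity. }
  rewrite (comp_assoc _ (mm h)), (em Hh), comp_assoc, (qm Hh). apply comp_id_l.
Qed.

Lemma dm X (h : Hom (exp H S (prod H S X)) X) (Hh : is_T_algebra h) G (s : Hom G S)
  (Y : Hom G (G0 h)) :
  mm h ∘ Y = h ∘ curry H (pair H (s ∘ pr2 H S G) (mm h ∘ (Y ∘ pr2 H S G))).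
Proof.
  rewrite <- (em Hh). unfold eh, cc. alg Hh. reflexivity.
Qed.

Lemma Mlaw X (h : Hom (exp H S (prod H S X)) X) (Hh : is_T_algebra h) G
  (σ : Hom (prod H S G) S) (Y : Hom (prod H S G) (G0 h)) :
  h ∘ curry H (pair H σ (mm h ∘ Y)) = h ∘ curry H (pair H (pr1 H S G) (mm h ∘ Y)).
Proof.
  rewrite (dm Hh (pr1 H S G) Y). alg Hh. reflexivity.
Qed.

Lemma b_hom X (h : Hom (exp H S (prod H S X)) X) (Hh : is_T_algebra h) :
  is_T_algebra_hom (Kstr H S (G0 h)) h (bb h).
Proof.
  unfold bb. pose proof Hh as Hh'. unf. alg Hh'. apply (Mlaw Hh).
Qed.

Lemma qmk X (h : Hom (exp H S (prod H S X)) X) (Hh : is_T_algebra h) Y (k : Hom Y (G0 h)) :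
  qq h ∘ (mm h ∘ k) = k.
Proof. rewrite comp_assoc, (qm Hh). apply comp_id_l. Qed.

Lemma emk X (h : Hom (exp H S (prod H S X)) X) (Hh : is_T_algebra h) Y (k : Hom Y (G0 h)) :
  eh h ∘ (mm h ∘ k) = mm h ∘ k.
Proof. rewrite comp_assoc, (em Hh). reflexivity. Qed.

Lemma hom_ek X (h : Hom (exp H S (prod H S X)) X) X' (h' : Hom (exp H S (prod H S X')) X')
  (u : Hom X X') (Hu : is_T_algebra_hom h h' u) Y (k : Hom Y X) :
  eh h' ∘ (u ∘ k) = u ∘ (eh h ∘ k).
Proof. rewrite !comp_assoc, (hom_e Hu). reflexivity. Qed.

Lemma Tmap_comp X Y Z (f : Hom X Y) (g : Hom Y Z) : Tmap H S g ∘ Tmap H S f = Tmap H S (g ∘ f).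
Proof. unf. apply ext. norm. reflexivity. Qed.
Lemma Tmap_id X : Tmap H S (idm X) = idm _.
Proof. unf. apply ext. norm. reflexivity. Qed.

Lemma binv_hom X (h : Hom (exp H S (prod H S X)) X) (Hh : is_T_algebra h) :
  is_T_algebra_hom h (Kstr H S (G0 h)) (binv h).
Proof.
  pose proof (b_hom Hh) as B. unfold is_T_algebra_hom, Tob in *.
  symmetry. transitivity (binv h ∘ (h ∘ (Tmap H S (bb h) ∘ Tmap H S (binv h)))).
  - rewrite Tmap_comp, (b_binv Hh), Tmap_id, comp_id_r. reflexivity.
  - unfold Tob in *. rewrite (comp_assoc _ _ h), B, !comp_assoc, (binv_b Hh), comp_id_l. reflexivity.
Qed.

Definition G1 X (h : Hom (exp H S (prod H S X)) X) X' (h' : Hom (exp H S (prod H S X')) X')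
  (u : Hom X X') : Hom (G0 h) (G0 h') := qq h' ∘ (u ∘ mm h).

Lemma G1_id X (h : Hom (exp H S (prod H S X)) X) (Hh : is_T_algebra h) : G1 h h (idm X) = idm _.
Proof. unfold G1. rewrite comp_id_l. apply (qm Hh). Qed.

Lemma G1_comp X1 (h1 : Hom (exp H S (prod H S X1)) X1) X2 (h2 : Hom (exp H S (prod H S X2)) X2)
  X3 (h3 : Hom (exp H S (prod H S X3)) X3) (u : Hom X1 X2) (v : Hom X2 X3) :
  is_T_algebra h1 -> is_T_algebra h2 -> is_T_algebra h3 ->
  is_T_algebra_hom h1 h2 u -> is_T_algebra_hom h2 h3 v ->
  G1 h1 h3 (v ∘ u) = G1 h2 h3 v ∘ G1 h1 h2 u.
Proof.
  intros A1 A2 A3 Hu Hv. unfold G1. norm. rewrite (mqk h2).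
  rewrite (hom_ek Hu), (em A1). reflexivity.
Qed.

Lemma b_nat X (h : Hom (exp H S (prod H S X)) X) X' (h' : Hom (exp H S (prod H S X')) X')
  (u : Hom X X') : is_T_algebra h -> is_T_algebra h' -> is_T_algebra_hom h h' u ->
  u ∘ bb h = bb h' ∘ expmap H S (G1 h h' u).
Proof.
  intros A A' Hu. pose proof Hu as E. unf.
  unfold bb, G1. rewrite comp_assoc, <- E. norm.
  rewrite (mqk h'), (hom_ek Hu), (emk A). reflexivity.
Qed.

Definition evs0 Y : Hom (exp H S Y) Y := ev H S Y ∘ pair H (s0 ∘ bang H (exp H S Y)) (idm _).
Definition aa Y : Hom Y (G0 (Kstr H S Y)) := qq (Kstr H S Y) ∘ curry H (pr2 H S Y).
Definition ainv Y : Hom (G0 (Kstr H S Y)) Y := evs0 Y ∘ mm (Kstr H S Y).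

Lemma eK Y : eh (Kstr H S Y) = curry H (pr2 H S Y) ∘ evs0 Y.
Proof. unfold eh, cc, evs0. unf. apply ext. norm. reflexivity. Qed.

Lemma a_iso Y : is_iso (aa Y).
Proof.
  exists (ainv Y). unfold aa, ainv. split.
  - rewrite <- comp_assoc, (mqk (Kstr H S Y)), eK. unfold evs0. norm. reflexivity.
  - transitivity (qq (Kstr H S Y) ∘ (eh (Kstr H S Y) ∘ mm (Kstr H S Y))).
    + rewrite eK. rewrite <- !comp_assoc. reflexivity.
    + rewrite (em (Kalg Y)). apply (qm (Kalg Y)).
Qed.

Lemma a_nat Y Y' (g : Hom Y Y') : G1 (Kstr H S Y) (Kstr H S Y') (expmap H S g) ∘ aa Y = aa Y' ∘ g.
Proof.
  unfold G1, aa. norm. rewrite (mqk (Kstr H S Y)), <- (hom_ek (Khom g)), <- (mqk (Kstr H S Y')),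
    (qmk (Kalg Y')). unfold expmap. norm. reflexivity.
Qed.

Lemma main_sec : comparison_is_equivalence H S.
Proof.
  split; [intro Y; apply Kalg|]. split; [intros; apply Khom|].
  exists (fun X h => G0 h), (fun X h X' h' u => G1 h h' u), aa, (fun X h => bb h).
  split; [intros; apply G1_id; auto|].
  split; [intros; apply G1_comp; auto|].
  split; [apply a_iso|].
  split; [apply a_nat|].
  split.
  - intros X h Hh. split; [apply b_hom; auto|].
    exists (binv h). split; [apply binv_b; auto|]. split; [apply b_binv; auto|].
    apply binv_hom; auto.
  - intros; apply b_nat; auto.
Qed.
End Main.

From Stdlib Require Import IndefiniteDescription.

Theorem mainTheorem11 (C : Category) (H : CCC C) (S : C) :
  has_regular_epi_mono_factorizations C ->
  inhabited (Hom (one H) S) ->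
  comparison_is_equivalence H S.
Proof.
  intros F [s0].
  assert (fact : forall (A B : C) (f : Hom A B),
    {M : C & {e : Hom A M & {m : Hom M B | regular_epi e /\ mono m /\ f = m ∘ e}}}).
  { intros A B f.
    pose proof (F A B f) as HF.
    apply constructive_indefinite_description in HF as [M HM]. exists M.
    apply constructive_indefinite_description in HM as [e He]. exists e.
    apply constructive_indefinite_description in He as [m Hm]. exists m. exact Hm. }
  exact (main_sec s0 fact).
Qed.
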